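(* Let $\star$ be a Weyl star product on $C^\infty(\mathbb R^N)[[\alpha]]$ that is weakly Hermitian and satisfies the stability of unity. Then $\star$ is weakly alternative: for all coordinate indices $i,j,k$, $$x^i\star(x^j\star x^k)-(x^i\star x^j)\star x^k=\tfrac16[x^i,x^j,x^k].$$ More precisely, the associator $A(x^i,x^j,x^k)$ is antisymmetric under exchange of any two of its arguments.
   Context: Work on $\mathbb R^N$ with real coordinates $x^1,\dots,x^N$. Functions are complex-valued smooth functions on $\mathbb R^N$. A star product is a $\mathbb C[[\alpha]]$-bilinear map on $C^\infty(\mathbb R^N)[[\alpha]]$ (formal power series in the real formal parameter $\alpha$). On functions it is given by $f\star g=fg+\sum_{r\ge1}(i\alpha)^rC_r(f,g)$, where the $C_r$ are bilinear bidifferential operators. Complex conjugation ${}^*$ acts coefficientwise on formal series in $\alpha$. Notation: - The associator is $A(f,g,h)=f\star(g\star h)-(f\star g)\star h$. - The star commutator is $[f,g]=f\star g-g\star f$. - The star Jacobiator is $[f,g,h]=[f,[g,h]]+[h,[f,g]]+[g,[h,f]]$. Definitions: - Weyl star product: for every $n\ge1$, all indices $i_1,\dots,i_n$ and all $f$, $$(x^{i_1}\cdots x^{i_n})\star f=\frac1{n!}\sum_{\sigma\in S_n}x^{i_{\sigma(1)}}\star\big(x^{i_{\sigma(2)}}\star(\cdots\star(x^{i_{\sigma(n)}}\star f)\cdots)\big),$$ where $x^{i_1}\cdots x^{i_n}$ denotes the ordinary product. - Weakly Hermitian: $(x^j\star f)^*=f^*\star x^j$ for all $j$ and all $f$. -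 Stability of unity: $f\star1=1\star f=f$ for all $f$. *)

(* Defs.v *)
From Stdlib Require Import Reals List Arith.
Import ListNotations.
Open Scope R_scope.

Definition Cx := (R * R)%type.
Definition Cre (r : R) : Cx := (r, 0).
Definition C0 : Cx := Cre 0.
Definition C1 : Cx := Cre 1.
Definition Ci : Cx := (0, 1).
Definition Cadd (a b : Cx) : Cx := (fst a + fst b, snd a + snd b).
Definition Copp (a : Cx) : Cx := (- fst a, - snd a).
Definition Cmul (a b : Cx) : Cx :=
  (fst a * fst b - snd a * snd b, fst a * snd b + snd a * fst b).
Definition Cconj (a : Cx) : Cx := (fst a, - snd a).
Fixpoint Cpow (a : Cx) (n : nat) : Cx :=
  match n with O => C1 | S n => Cmul a (Cpow a n) end.
Fixpoint Csum (n : nat) (g : nat -> Cx) : Cx :=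
  match n with O => C0 | S n => Cadd (Csum n g) (g n) end.

Definition idx (N : nat) := {i : nat | (i < N)%nat}.
Definition pt (N : nat) := idx N -> R.
Definition fn (N : nat) := pt N -> Cx.

Definition upd {N} (x : pt N) (i : idx N) (t : R) : pt N :=
  fun j => if Nat.eq_dec (proj1_sig j) (proj1_sig i) then t else x j.

Definition has_partial {N} (i : idx N) (f g : fn N) : Prop :=
  forall x : pt N,
    derivable_pt_lim (fun t => fst (f (upd x i t))) (x i) (fst (g x)) /\
    derivable_pt_lim (fun t => snd (f (upd x i t))) (x i) (snd (g x)).

(** [diff_along [i1;...;ik] f g] : g = d_{ik} ... d_{i1} f *)
Inductive diff_along {N} : list (idx N) -> fn N -> fn N -> Prop :=
| da_nil f : diff_along nil f f
| da_cons i l f h g : has_partial i f h -> diff_along l h g -> diff_along (i :: l) f g.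

Definition smooth {N} (f : fn N) : Prop := forall l, exists g, diff_along l f g.

(** B is a bidifferential operator (finite order, smooth complex coefficients):
    B(f,g) = sum_t c_t * (d^{a_t} f) * (d^{b_t} g) on smooth functions. *)
Definition bidiff {N} (B : fn N -> fn N -> fn N) : Prop :=
  exists T : list (fn N * list (idx N) * list (idx N)),
    (forall t, In t T -> smooth (fst (fst t))) /\
    forall (f g : fn N) (Df Dg : list (idx N) -> fn N),
      smooth f -> smooth g ->
      (forall l, diff_along l f (Df l)) -> (forall l, diff_along l g (Dg l)) ->
      forall x, B f g x =
        fold_right (fun t acc =>
          Cadd (Cmul (fst (fst t) x) (Cmul (Df (snd (fst t)) x) (Dg (snd t) x))) acc)
          C0 T.

Definition ser (N : nat) := nat -> fn N.

Definition fmul {N} (f g : fn N) : fn N := fun x => Cmul (f x) (g x).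
Definition fconj {N} (f : fn N) : fn N := fun x => Cconj (f x).
Definition coord {N} (i : idx N) : fn N := fun x => Cre (x i).
Definition fone {N} : fn N := fun _ => C1.

Definition cst {N} (f : fn N) : ser N :=
  fun n => match n with O => f | S _ => fun _ => C0 end.

Definition sadd {N} (F G : ser N) : ser N := fun n x => Cadd (F n x) (G n x).
Definition sopp {N} (F : ser N) : ser N := fun n x => Copp (F n x).
Definition ssub {N} (F G : ser N) : ser N := sadd F (sopp G).
Definition sscale {N} (c : Cx) (F : ser N) : ser N := fun n x => Cmul c (F n x).
Definition sconj {N} (F : ser N) : ser N := fun n x => Cconj (F n x).
Definition szero {N} : ser N := fun _ _ => C0.
Definition ssum {N} (l : list (ser N)) : ser N := fold_right sadd szero l.

(** C_0 is the pointwise product; C r for r >= 1 are the given cochains *)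
Definition Cfull {N} (C : nat -> fn N -> fn N -> fn N) (r : nat) : fn N -> fn N -> fn N :=
  match r with O => fmul | S _ => C r end.

(** The star product determined by (C_r): f * g = sum_r (i alpha)^r C_r(f,g),
    extended C[[alpha]]-bilinearly:
    (F * G)_n = sum_{r + a + b = n} i^r C_r(F_a, G_b). *)
Definition star {N} (C : nat -> fn N -> fn N -> fn N) (F G : ser N) : ser N :=
  fun n x =>
    Csum (S n) (fun r =>
      Cmul (Cpow Ci r)
        (Csum (S (n - r)) (fun a => Cfull C r (F a) (G (n - r - a)%nat) x))).

Definition assoc {N} C (F G H : ser N) : ser N :=
  ssub (star C F (star C G H)) (star C (star C F G) H).
Definition comm {N} C (F G : ser N) : ser N := ssub (star C F G) (star C G F).
Definition jacobiator {N} C (F G H : ser N) : ser N :=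
  sadd (sadd (comm C F (comm C G H)) (comm C H (comm C F G))) (comm C G (comm C H F)).

Fixpoint mono {N} (l : list (idx N)) : fn N :=
  match l with nil => fone | i :: l => fmul (coord i) (mono l) end.

Fixpoint nest {N} C (l : list (idx N)) (G : ser N) : ser N :=
  match l with nil => G | i :: l => star C (cst (coord i)) (nest C l G) end.

Fixpoint inserts {A} (x : A) (l : list A) : list (list A) :=
  match l with
  | nil => [[x]]
  | y :: l' => (x :: y :: l') :: map (cons y) (inserts x l')
  end.
Fixpoint perms {A} (l : list A) : list (list A) :=
  match l with nil => [nil] | x :: l' => flat_map (inserts x) (perms l') end.

Definition weyl {N} (C : nat -> fn N -> fn N -> fn N) : Prop :=
  forall (l : list (idx N)), (1 <= length l)%nat ->
  forall f : fn N, smooth f ->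
    star C (cst (mono l)) (cst f) =
    sscale (Cre (/ INR (fact (length l))))
      (ssum (map (fun p => nest C p (cst f)) (perms l))).

Definition weakly_hermitian {N} (C : nat -> fn N -> fn N -> fn N) : Prop :=
  forall (j : idx N) (f : fn N), smooth f ->
    sconj (star C (cst (coord j)) (cst f)) = star C (cst (fconj f)) (cst (coord j)).

Definition stable_unity {N} (C : nat -> fn N -> fn N -> fn N) : Prop :=
  forall f : fn N, smooth f ->
    star C (cst f) (cst fone) = cst f /\ star C (cst fone) (cst f) = cst f.

(* Main.v *)
Require Import Defs.
From Stdlib Require Import Reals List Lra Lia ProofIrrelevance FunctionalExtensionality IndefiniteDescription Factorial.
Open Scope R_scope.

Lemma Cx_eq (p q : Cx) : fst p = fst q -> snd p = snd q -> p = q.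
Proof. destruct p, q; simpl; intros; subst; reflexivity. Qed.

Lemma dpl_ext f g x l l' : derivable_pt_lim f x l -> (forall t, f t = g t) -> l = l' ->
  derivable_pt_lim g x l'.
Proof.
  intros H E <-. assert (f = g) by (apply functional_extensionality; auto). subst; auto.
Qed.

Lemma dpl_lin f g x l1 l2 a b : derivable_pt_lim f x l1 -> derivable_pt_lim g x l2 ->
  derivable_pt_lim (fun t => a * f t + b * g t) x (a*l1 + b*l2).
Proof.
  intros H1 H2.
  exact (derivable_pt_lim_plus _ _ x _ _ (derivable_pt_lim_scal f a x l1 H1)
    (derivable_pt_lim_scal g b x l2 H2)).
Qed.

Lemma dpl_mul f g x l1 l2 : derivable_pt_lim f x l1 -> derivable_pt_lim g x l2 ->
  derivable_pt_lim (fun t => f t * g t) x (l1 * g x + f x * l2).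
Proof. intros H1 H2. exact (derivable_pt_lim_mult f g x l1 l2 H1 H2). Qed.

Lemma dpl_cst c x : derivable_pt_lim (fun _ => c) x 0.
Proof. exact (derivable_pt_lim_const c x). Qed.

Lemma dpl_id x : derivable_pt_lim (fun t => t) x 1.
Proof. exact (derivable_pt_lim_id x). Qed.

Lemma upd_same {N} (x : pt N) i : upd x i (x i) = x.
Proof.
  apply functional_extensionality; intro j. unfold upd.
  destruct (Nat.eq_dec _ _) as [e|]; auto.
  destruct i as [i hi], j as [j hj]; simpl in e; subst. f_equal. f_equal. apply proof_irrelevance.
Qed.

Definition rl (a b : R) (p q : Cx) : Cx := (a * fst p + b * fst q, a * snd p + b * snd q).
Definition rlin {N} a b (v w : fn N) : fn N := fun x => rl a b (v x) (w x).

Lemma hp_lin {N} (i : idx N) a b v w dv dw : has_partial i v dv -> has_partial i w dw ->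
  has_partial i (rlin a b v w) (rlin a b dv dw).
Proof.
  intros H1 H2 x. destruct (H1 x) as [A1 B1], (H2 x) as [A2 B2]. split.
  - eapply dpl_ext. apply (dpl_lin _ _ _ _ _ a b A1 A2). intro; reflexivity. reflexivity.
  - eapply dpl_ext. apply (dpl_lin _ _ _ _ _ a b B1 B2). intro; reflexivity. reflexivity.
Qed.

Lemma da_lin {N} l : forall (v w dv dw : fn N) a b, diff_along l v dv -> diff_along l w dw ->
  diff_along l (rlin a b v w) (rlin a b dv dw).
Proof.
  induction l as [|i l IH]; intros v w dv dw a b H1 H2.
  - inversion H1; inversion H2; subst. constructor.
  - inversion H1; inversion H2; subst. econstructor. apply hp_lin; eauto. apply IH; auto.
Qed.

Lemma hp_unique {N} (i : idx N) f h1 h2 : has_partial i f h1 -> has_partial i f h2 -> h1 = h2.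
Proof.
  intros H1 H2. apply functional_extensionality; intro x.
  destruct (H1 x), (H2 x). apply Cx_eq; eapply uniqueness_limite; eauto.
Qed.

Lemma da_inv {N} (i : idx N) l f g : diff_along (i :: l) f g ->
  exists h, has_partial i f h /\ diff_along l h g.
Proof. intro H; inversion H; subst; eauto. Qed.

Lemma smooth_hp {N} (i : idx N) f h : smooth f -> has_partial i f h -> smooth h.
Proof.
  intros Hs Hp l. destruct (Hs (i :: l)) as [g' Hg']. apply da_inv in Hg'.
  destruct Hg' as [h' [Hh' Hd]]. exists g'. rewrite (hp_unique _ _ _ _ Hh' Hp) in Hd. auto.
Qed.

Lemma smooth_da {N} l : forall (f h : fn N), smooth f -> diff_along l f h -> smooth h.
Proof.
  induction l as [|i l IH]; intros f h Hs Hd.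
  - inversion Hd; subst; auto.
  - apply da_inv in Hd. destruct Hd as [h' [Hp Hd]]. apply (IH h'); auto.
    eapply smooth_hp; eauto.
Qed.

Lemma smooth_lin {N} (v w : fn N) a b : smooth v -> smooth w -> smooth (rlin a b v w).
Proof.
  intros H1 H2 l. destruct (H1 l), (H2 l). eexists. apply da_lin; eauto.
Qed.

Lemma smooth_const {N} (c : Cx) : smooth (fun _ : pt N => c).
Proof.
  intro l; revert c; induction l as [|i l IH]; intro c.
  - eexists; constructor.
  - destruct (IH C0) as [g Hg]. exists g. econstructor; [|exact Hg].
    intro x; split; apply dpl_cst.
Qed.

Lemma smooth_coord {N} (m : idx N) : smooth (coord m).
Proof.
  intro l; destruct l as [|i l].
  - eexists; constructor.
  - destruct (smooth_const (N:=N) (Cre (if Nat.eq_dec (proj1_sig m) (proj1_sig i) then 1 else 0)) l) as [g Hg].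
    exists g. econstructor; [|exact Hg]. intro x; split; simpl; unfold upd.
    + destruct (Nat.eq_dec _ _). apply dpl_id. apply dpl_cst.
    + apply dpl_cst.
Qed.

Lemma hp_mul {N} (i : idx N) f g df dg : has_partial i f df -> has_partial i g dg ->
  has_partial i (fmul f g) (rlin 1 1 (fmul df g) (fmul f dg)).
Proof.
  intros H1 H2 x. destruct (H1 x) as [A1 B1], (H2 x) as [A2 B2].
  pose proof (dpl_mul _ _ _ _ _ A1 A2) as P1.
  pose proof (dpl_mul _ _ _ _ _ B1 B2) as P2.
  pose proof (dpl_mul _ _ _ _ _ A1 B2) as P3.
  pose proof (dpl_mul _ _ _ _ _ B1 A2) as P4.
  cbv beta in P1, P2, P3, P4. rewrite !upd_same in P1, P2, P3, P4.
  split.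
  - eapply dpl_ext. apply (dpl_lin _ _ _ _ _ 1 (-1) P1 P2).
    intro; unfold fmul, Cmul; simpl; ring. unfold rlin, rl, fmul, Cmul; simpl; ring.
  - eapply dpl_ext. apply (dpl_lin _ _ _ _ _ 1 1 P3 P4).
    intro; unfold fmul, Cmul; simpl; ring. unfold rlin, rl, fmul, Cmul; simpl; ring.
Qed.

Lemma smooth_mul_aux {N} l : forall (f g : fn N), smooth f -> smooth g ->
  exists h, diff_along l (fmul f g) h.
Proof.
  induction l as [|i l IH]; intros f g Hf Hg.
  - eexists; constructor.
  - destruct (Hf (i :: nil)) as [u Hu]; apply da_inv in Hu; destruct Hu as [df [Hdf _]].
    destruct (Hg (i :: nil)) as [v Hv]; apply da_inv in Hv; destruct Hv as [dg [Hdg _]].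
    assert (smooth df) by exact (smooth_hp i f df Hf Hdf).
    assert (smooth dg) by exact (smooth_hp i g dg Hg Hdg).
    destruct (IH df g) as [p1 Hp1]; auto.
    destruct (IH f dg) as [p2 Hp2]; auto.
    eexists. econstructor. apply hp_mul; eauto. apply da_lin; eauto.
Qed.

Lemma smooth_mul {N} (f g : fn N) : smooth f -> smooth g -> smooth (fmul f g).
Proof. intros; intro l; apply smooth_mul_aux; auto. Qed.

Lemma da_conj {N} l : forall (f h : fn N), diff_along l f h -> diff_along l (fconj f) (fconj h).
Proof.
  induction l as [|i l IH]; intros f h H; inversion H; subst. constructor.
  econstructor; [|apply IH; eauto]. intro x; destruct (H2 x) as [A B]; split.
  exact A. simpl. eapply dpl_ext. apply (dpl_lin _ _ _ _ _ (-1) 0 B B).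
  intro; simpl; ring. ring.
Qed.

Lemma smooth_conj {N} (f : fn N) : smooth f -> smooth (fconj f).
Proof. intros H l; destruct (H l); eexists; apply da_conj; eauto. Qed.

Lemma smooth_eq {N} (f g : fn N) : smooth f -> (forall x, f x = g x) -> smooth g.
Proof. intros H E. replace g with f; auto. apply functional_extensionality; auto. Qed.

Lemma smooth_D {N} (f : fn N) : smooth f -> exists D : list (idx N) -> fn N, forall l, diff_along l f (D l).
Proof. intro H. exact (functional_choice _ H). Qed.

Lemma smooth_add {N} (f g : fn N) : smooth f -> smooth g -> smooth (fun x => Cadd (f x) (g x)).
Proof.
  intros. eapply smooth_eq. apply (smooth_lin f g 1 1); auto.
  intro; apply Cx_eq; unfold rlin, rl, Cadd; simpl; ring.
Qed.

Lemma bidiff_lin2 {N} (B : fn N -> fn N -> fn N) u v w a b : bidiff B ->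
  smooth u -> smooth v -> smooth w -> forall x, B u (rlin a b v w) x = rl a b (B u v x) (B u w x).
Proof.
  intros [T [Hc HT]] Hu Hv Hw x.
  destruct (smooth_D u Hu) as [Du HDu].
  destruct (smooth_D v Hv) as [Dv HDv].
  destruct (smooth_D w Hw) as [Dw HDw].
  rewrite (HT u (rlin a b v w) Du (fun l => rlin a b (Dv l) (Dw l))); auto.
  2: apply smooth_lin; auto.
  2: intro l; apply da_lin; auto.
  rewrite (HT u v Du Dv), (HT u w Du Dw); auto.
  clear Hc HT. induction T as [|t T IH]; simpl.
  - apply Cx_eq; unfold rl, C0, Cre; simpl; ring.
  - rewrite IH. apply Cx_eq; unfold rlin, rl, Cadd, Cmul; simpl; ring.
Qed.

Lemma bidiff_lin1 {N} (B : fn N -> fn N -> fn N) u v w a b : bidiff B ->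
  smooth u -> smooth v -> smooth w -> forall x, B (rlin a b v w) u x = rl a b (B v u x) (B w u x).
Proof.
  intros [T [Hc HT]] Hu Hv Hw x.
  destruct (smooth_D u Hu) as [Du HDu].
  destruct (smooth_D v Hv) as [Dv HDv].
  destruct (smooth_D w Hw) as [Dw HDw].
  rewrite (HT (rlin a b v w) u (fun l => rlin a b (Dv l) (Dw l)) Du); auto.
  2: apply smooth_lin; auto.
  2: intro l; apply da_lin; auto.
  rewrite (HT v u Dv Du), (HT w u Dw Du); auto.
  clear Hc HT. induction T as [|t T IH]; simpl.
  - apply Cx_eq; unfold rl, C0, Cre; simpl; ring.
  - rewrite IH. apply Cx_eq; unfold rlin, rl, Cadd, Cmul; simpl; ring.
Qed.

Lemma bidiff_smooth {N} (B : fn N -> fn N -> fn N) u v : bidiff B ->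
  smooth u -> smooth v -> smooth (B u v).
Proof.
  intros [T [Hc HT]] Hu Hv.
  destruct (smooth_D u Hu) as [Du HDu].
  destruct (smooth_D v Hv) as [Dv HDv].
  assert (E : B u v = fun x => fold_right (fun t acc =>
          Cadd (Cmul (fst (fst t) x) (Cmul (Du (snd (fst t)) x) (Dv (snd t) x))) acc) C0 T).
  { apply functional_extensionality; intro x; apply (HT u v Du Dv); auto. }
  rewrite E. clear E.
  assert (HDs : forall l, smooth (Du l) /\ smooth (Dv l)).
  { intro l; split; [exact (smooth_da l u (Du l) Hu (HDu l)) | exact (smooth_da l v (Dv l) Hv (HDv l))]. }
  clear HT. induction T as [|t T IH]; simpl.
  - apply smooth_const.
  - apply smooth_add. 2: apply IH; intros; apply Hc; simpl; auto.
    apply (smooth_mul (fst (fst t)) (fmul (Du (snd (fst t))) (Dv (snd t)))).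
    apply Hc; simpl; auto. apply smooth_mul; apply HDs.
Qed.

Lemma Csum_ext n (f g : nat -> Cx) : (forall k, f k = g k) -> Csum n f = Csum n g.
Proof. intro H; induction n; simpl; auto. rewrite IHn, H; auto. Qed.

Lemma Csum_rl n a b (f g : nat -> Cx) :
  Csum n (fun k => rl a b (f k) (g k)) = rl a b (Csum n f) (Csum n g).
Proof.
  induction n; simpl.
  - apply Cx_eq; unfold rl, C0, Cre; simpl; ring.
  - rewrite IHn. apply Cx_eq; unfold rl, Cadd; simpl; ring.
Qed.

Lemma Cmul_rl c a b p q : Cmul c (rl a b p q) = rl a b (Cmul c p) (Cmul c q).
Proof. apply Cx_eq; unfold rl, Cmul; simpl; ring. Qed.

Lemma Cmul_C0 c : Cmul c C0 = C0.
Proof. apply Cx_eq; unfold Cmul, C0, Cre; simpl; ring. Qed.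

Lemma Csum_zero n (g : nat -> Cx) : (forall a, (a < n)%nat -> g a = C0) -> Csum n g = C0.
Proof.
  induction n; intro H; simpl; auto. rewrite IHn by (intros; apply H; lia).
  rewrite H by lia. apply Cx_eq; unfold Cadd, C0, Cre; simpl; ring.
Qed.

Lemma Csum_last m (g : nat -> Cx) : (forall a, (a < m)%nat -> g a = C0) -> Csum (S m) g = g m.
Proof.
  intro H; simpl. rewrite Csum_zero by auto. apply Cx_eq; unfold Cadd, C0, Cre; simpl; ring.
Qed.

Lemma Csum_first m (g : nat -> Cx) : (forall a, (1 <= a)%nat -> g a = C0) -> Csum (S m) g = g O.
Proof.
  intro H; induction m.
  - simpl. apply Cx_eq; unfold Cadd, C0, Cre; simpl; ring.
  - change (Csum (S (S m)) g) with (Cadd (Csum (S m) g) (g (S m))).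
    rewrite IHm, (H (S m)) by lia. apply Cx_eq; unfold Cadd, C0, Cre; simpl; ring.
Qed.

Lemma Cconj_Csum n (f : nat -> Cx) : Cconj (Csum n f) = Csum n (fun k => Cconj (f k)).
Proof.
  induction n; simpl.
  - apply Cx_eq; unfold Cconj, C0, Cre; simpl; ring.
  - rewrite <- IHn. apply Cx_eq; unfold Cconj, Cadd; simpl; ring.
Qed.

Lemma smooth_Csum {N} n (g : nat -> fn N) : (forall k, smooth (g k)) ->
  smooth (fun x => Csum n (fun k => g k x)).
Proof.
  intro H; induction n; simpl. apply smooth_const. apply smooth_add; auto.
Qed.

Lemma smooth_cmul {N} c (f : fn N) : smooth f -> smooth (fun x => Cmul c (f x)).
Proof. intro; apply (smooth_mul (fun _ => c) f); auto; apply smooth_const. Qed.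

Definition fz {N} : fn N := fun _ => C0.

Lemma smooth_fz {N} : smooth (@fz N).
Proof. unfold fz. apply smooth_const. Qed.

Section S.
Variable N : nat.
Variable C : nat -> fn N -> fn N -> fn N.
Hypothesis Hbidiff : forall r, (1 <= r)%nat -> bidiff (C r).

Lemma Cfull_smooth r u v : smooth u -> smooth v -> smooth (Cfull C r u v).
Proof.
  intros; destruct r; simpl. apply smooth_mul; auto.
  apply bidiff_smooth; auto. apply Hbidiff; lia.
Qed.

Lemma Cfull_lin2 r u v w a b : smooth u -> smooth v -> smooth w ->
  forall x, Cfull C r u (rlin a b v w) x = rl a b (Cfull C r u v x) (Cfull C r u w x).
Proof.
  intros; destruct r; simpl.
  - apply Cx_eq; unfold fmul, rlin, rl, Cmul; simpl; ring.
  - apply bidiff_lin2; auto. apply Hbidiff; lia.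
Qed.

Lemma Cfull_lin1 r u v w a b : smooth u -> smooth v -> smooth w ->
  forall x, Cfull C r (rlin a b v w) u x = rl a b (Cfull C r v u x) (Cfull C r w u x).
Proof.
  intros; destruct r; simpl.
  - apply Cx_eq; unfold fmul, rlin, rl, Cmul; simpl; ring.
  - apply bidiff_lin1; auto. apply Hbidiff; lia.
Qed.

Lemma fz_rlin : (fz : fn N) = rlin 0 0 fz fz.
Proof. apply functional_extensionality; intro; apply Cx_eq; unfold rlin, rl, fz, C0, Cre; simpl; ring. Qed.

Lemma Cfull_zero_r r u x : smooth u -> Cfull C r u fz x = C0.
Proof.
  intro. rewrite fz_rlin, Cfull_lin2; auto using smooth_fz.
  apply Cx_eq; unfold rl, C0, Cre; simpl; ring.
Qed.

Lemma Cfull_zero_l r u x : smooth u -> Cfull C r fz u x = C0.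
Proof.
  intro. rewrite fz_rlin, Cfull_lin1; auto using smooth_fz.
  apply Cx_eq; unfold rl, C0, Cre; simpl; ring.
Qed.

Definition ssmooth (F : ser N) := forall n, smooth (F n).
Definition srlin a b (F G : ser N) : ser N := fun n => rlin a b (F n) (G n).

Lemma ss_star F G : ssmooth F -> ssmooth G -> ssmooth (star C F G).
Proof.
  intros HF HG n. unfold star.
  apply (smooth_Csum (S n) (fun r x => Cmul (Cpow Ci r) (Csum (S (n - r))
     (fun a => Cfull C r (F a) (G (n - r - a)%nat) x)))).
  intro r. apply smooth_cmul.
  apply (smooth_Csum _ (fun a => Cfull C r (F a) (G (n - r - a)%nat))).
  intro; apply Cfull_smooth; auto.
Qed.

Lemma ss_cst f : smooth f -> ssmooth (cst f).
Proof. intros H [|n]; simpl; auto. apply smooth_const. Qed.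

Lemma ss_conj F : ssmooth F -> ssmooth (sconj F).
Proof. intros H n. apply smooth_conj; auto. Qed.

Lemma ss_lin a b F G : ssmooth F -> ssmooth G -> ssmooth (srlin a b F G).
Proof. intros H1 H2 n; apply smooth_lin; auto. Qed.

Lemma star_lin2 F G H a b : ssmooth F -> ssmooth G -> ssmooth H ->
  star C F (srlin a b G H) = srlin a b (star C F G) (star C F H).
Proof.
  intros HF HG HH. apply functional_extensionality; intro n.
  apply functional_extensionality; intro x. unfold star, srlin.
  match goal with |- _ = rlin a b ?f ?g x => change (rlin a b f g x) with (rl a b (f x) (g x)) end; cbv beta.
  rewrite <- Csum_rl. apply Csum_ext; intro r. rewrite <- Cmul_rl. f_equal.
  rewrite <- Csum_rl. apply Csum_ext; intro a'. apply Cfull_lin2; auto.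
Qed.

Lemma star_lin1 F G H a b : ssmooth F -> ssmooth G -> ssmooth H ->
  star C (srlin a b G H) F = srlin a b (star C G F) (star C H F).
Proof.
  intros HF HG HH. apply functional_extensionality; intro n.
  apply functional_extensionality; intro x. unfold star, srlin.
  match goal with |- _ = rlin a b ?f ?g x => change (rlin a b f g x) with (rl a b (f x) (g x)) end; cbv beta.
  rewrite <- Csum_rl. apply Csum_ext; intro r. rewrite <- Cmul_rl. f_equal.
  rewrite <- Csum_rl. apply Csum_ext; intro a'. apply Cfull_lin1; auto.
Qed.

Lemma star_cst_l f G n x : smooth f -> ssmooth G ->
  star C (cst f) G n x = Csum (S n) (fun r => Cmul (Cpow Ci r) (Cfull C r f (G (n - r)%nat) x)).
Proof.
  intros Hf HG. unfold star. apply Csum_ext; intro r. f_equal.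
  rewrite Csum_first. simpl. rewrite Nat.sub_0_r. reflexivity.
  intros [|a] Ha. lia. simpl. apply Cfull_zero_l; auto.
Qed.

Lemma star_cst_r f G n x : smooth f -> ssmooth G ->
  star C G (cst f) n x = Csum (S n) (fun r => Cmul (Cpow Ci r) (Cfull C r (G (n - r)%nat) f x)).
Proof.
  intros Hf HG. unfold star. apply Csum_ext; intro r. f_equal.
  rewrite Csum_last. rewrite Nat.sub_diag. reflexivity.
  intros a Ha. destruct (n - r - a)%nat eqn:E. lia. simpl. apply Cfull_zero_r; auto.
Qed.

End S.

Section M.
Variable N : nat.
Variable C : nat -> fn N -> fn N -> fn N.
Hypothesis Hbidiff : forall r, (1 <= r)%nat -> bidiff (C r).
Hypothesis Hweyl : weyl C.
Hypothesis Hherm : weakly_hermitian C.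
Hypothesis Hunit : stable_unity C.

Definition X (m : idx N) : ser N := cst (coord m).
Definition P p q := star C (X p) (X q).
Definition aa p q r := star C (X p) (star C (X q) (X r)).

Lemma ssX m : ssmooth N (X m).
Proof. apply ss_cst, smooth_coord. Qed.
Lemma ssP p q : ssmooth N (P p q).
Proof. apply ss_star; auto using ssX. Qed.

Lemma herm_coef g k n x : smooth g ->
  Cconj (Cmul (Cpow Ci n) (Cfull C n (coord k) g x)) = Cmul (Cpow Ci n) (Cfull C n (fconj g) (coord k) x).
Proof.
  intro Hg. pose proof (f_equal (fun F => F n x) (Hherm k g Hg)) as E. cbv beta in E.
  unfold sconj in E.
  rewrite (star_cst_l N C Hbidiff) in E; auto using smooth_coord, ss_cst.
  rewrite (star_cst_r N C Hbidiff) in E; auto using smooth_coord, ss_cst, smooth_conj.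
  rewrite !Csum_last in E.
  - rewrite !Nat.sub_diag in E. exact E.
  - intros a Ha. destruct (n - a)%nat eqn:Ea. lia. simpl.
    rewrite (Cfull_zero_l N C Hbidiff); auto using smooth_coord. apply Cmul_C0.
  - intros a Ha. destruct (n - a)%nat eqn:Ea. lia. simpl.
    rewrite (Cfull_zero_r N C Hbidiff); auto using smooth_coord. apply Cmul_C0.
Qed.

Lemma herm_series G k : ssmooth N G ->
  sconj (star C (cst (coord k)) G) = star C (sconj G) (cst (coord k)).
Proof.
  intro HG. apply functional_extensionality; intro n; apply functional_extensionality; intro x.
  unfold sconj at 1.
  rewrite (star_cst_l N C Hbidiff), (star_cst_r N C Hbidiff); auto using smooth_coord, ss_conj.
  rewrite Cconj_Csum. apply Csum_ext; intro r. apply herm_coef; auto.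
Qed.

Definition M2 i j : fn N := mono (i :: j :: nil).

Lemma smooth_M2 i j : smooth (M2 i j).
Proof.
  unfold M2; simpl. apply smooth_mul. apply smooth_coord.
  apply smooth_mul. apply smooth_coord. unfold fone; apply smooth_const.
Qed.

Lemma W2 i j f n x : smooth f ->
  star C (cst (M2 i j)) (cst f) n x =
  rl (/2) (/2) (star C (X i) (star C (X j) (cst f)) n x) (star C (X j) (star C (X i) (cst f)) n x).
Proof.
  intro Hf. unfold M2. rewrite Hweyl; [| simpl; lia | exact Hf].
  assert (E : INR (fact (length (i :: j :: nil))) = 2) by (simpl; ring). rewrite E.
  unfold ssum. cbn [perms flat_map inserts map app fold_right nest].
  unfold sscale, sadd, szero, X. apply Cx_eq; unfold rl, Cmul, Cadd, C0, Cre; cbn [fst snd]; ring.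
Qed.

Lemma K2 i j : cst (M2 i j) = srlin N (/2) (/2) (P i j) (P j i).
Proof.
  apply functional_extensionality; intro n; apply functional_extensionality; intro x.
  destruct (Hunit (M2 i j) (smooth_M2 i j)) as [U _].
  rewrite <- U. rewrite W2 by (unfold fone; apply smooth_const).
  unfold X. destruct (Hunit (coord j) (smooth_coord j)) as [Uj _].
  destruct (Hunit (coord i) (smooth_coord i)) as [Ui _].
  rewrite Uj, Ui. reflexivity.
Qed.

Lemma fconj_M2 i j : fconj (M2 i j) = M2 i j.
Proof.
  apply functional_extensionality; intro x. unfold fconj, M2; simpl.
  apply Cx_eq; unfold Cconj, fmul, coord, fone, Cmul, Cre, C1; simpl; ring.
Qed.

Lemma fconj_coord k : fconj (coord k) = (coord k : fn N).
Proof.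
  apply functional_extensionality; intro x. apply Cx_eq; unfold fconj, Cconj, coord, Cre; simpl; ring.
Qed.

Lemma Kc i j k n x :
  rl (/2) (/2) (aa i j k n x) (aa j i k n x) = Cconj (rl (/2) (/2) (aa k i j n x) (aa k j i n x)).
Proof.
  unfold aa. etransitivity; [symmetry; apply (W2 i j (coord k) n x (smooth_coord k))|].
  pose proof (Hherm k (M2 i j) (smooth_M2 i j)) as H. rewrite fconj_M2 in H.
  unfold X. rewrite <- H. unfold sconj. f_equal.
  rewrite K2 at 1. rewrite (star_lin2 N C Hbidiff); auto using ssX, ssP.
  all: try apply ssX.
Qed.

Lemma K5 p q r : star C (P p q) (X r) = sconj (aa r q p).
Proof.
  unfold aa. change (star C (X q) (X p)) with (P q p).
  unfold X at 2. rewrite herm_series by apply ssP. f_equal.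
  unfold P, X. rewrite Hherm by apply smooth_coord. rewrite fconj_coord. reflexivity.
Qed.

Lemma ssub_rl (F G : ser N) : ssub F G = srlin N 1 (-1) F G.
Proof.
  apply functional_extensionality; intro n; apply functional_extensionality; intro x.
  apply Cx_eq; unfold ssub, sadd, sopp, srlin, rlin, rl, Cadd, Copp; simpl; ring.
Qed.

Lemma Hassoc p q r : assoc C (X p) (X q) (X r) = ssub (aa p q r) (sconj (aa r q p)).
Proof. unfold assoc. rewrite <- K5. reflexivity. Qed.

Lemma Hcomm p q r : comm C (X p) (comm C (X q) (X r)) =
  srlin N 1 (-1) (srlin N 1 (-1) (aa p q r) (aa p r q)) (srlin N 1 (-1) (sconj (aa p r q)) (sconj (aa p q r))).
Proof.
  unfold comm. rewrite !ssub_rl. fold (P q r) (P r q).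
  rewrite (star_lin2 N C Hbidiff), (star_lin1 N C Hbidiff); auto using ssX, ssP.
  rewrite !K5. reflexivity.
Qed.
End M.

Theorem proposition1 (N : nat) (C : nat -> fn N -> fn N -> fn N)
  (Hbidiff : forall r, (1 <= r)%nat -> bidiff (C r))
  (Hweyl : weyl C) (Hherm : weakly_hermitian C) (Hunit : stable_unity C) :
  forall i j k : idx N,
    let X := fun m => cst (coord m) in
    assoc C (X i) (X j) (X k) = sscale (Cre (/ 6)) (jacobiator C (X i) (X j) (X k)) /\
    assoc C (X i) (X j) (X k) = sopp (assoc C (X j) (X i) (X k)) /\
    assoc C (X i) (X j) (X k) = sopp (assoc C (X i) (X k) (X j)) /\
    assoc C (X i) (X j) (X k) = sopp (assoc C (X k) (X j) (X i)).
Proof.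
  intros i j k. cbv zeta beta.
  change (cst (coord i)) with (X N i). change (cst (coord j)) with (X N j).
  change (cst (coord k)) with (X N k).
  unfold jacobiator. rewrite !(Hassoc N C Hbidiff Hherm), !(Hcomm N C Hbidiff Hherm).
  assert (KC : forall p q r n x,
    fst (aa N C p q r n x) + fst (aa N C q p r n x) = fst (aa N C r p q n x) + fst (aa N C r q p n x) /\
    snd (aa N C p q r n x) + snd (aa N C q p r n x) = - (snd (aa N C r p q n x) + snd (aa N C r q p n x))).
  { intros p q r n x. pose proof (Kc N C Hbidiff Hweyl Hherm Hunit p q r n x) as E.
    pose proof (f_equal fst E) as E1. pose proof (f_equal snd E) as E2.
    unfold rl, Cconj in E1, E2; cbn [fst snd] in E1, E2. split; lra. }
  repeat split; apply functional_extensionality; intro n; apply functional_extensionality; intro x;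
  apply Cx_eq; unfold ssub, sadd, sopp, sconj, sscale, srlin, rlin, rl, Cadd, Copp, Cconj, Cmul, Cre;
  cbn [fst snd];
  destruct (KC i j k n x), (KC j i k n x), (KC i k j n x), (KC k i j n x), (KC j k i n x), (KC k j i n x);
  lra.
Qed.
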